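(* Let $\mathscr{R}$ be a von Neumann algebra acting on a Hilbert space $\mathscr{H}$ and let $\mathscr{I}$ be a left ideal of $\mathscr{R}$. Then there is a left ideal $\mathscr{J}$ of $\mathcal{B}(\mathscr{H})$ such that $\mathscr{I} = \mathscr{J}\cap\mathscr{R}$.
   Context: Left ideals are not assumed to be closed in any topology. *)

(* Defs.v *)
From HB Require Import structures.
From mathcomp Require Import all_boot all_order all_algebra.
From mathcomp Require Import complex.
From mathcomp Require Import reals.
Set Implicit Arguments. Unset Strict Implicit. Unset Printing Implicit Defensive.
Import Order.TTheory GRing.Theory Num.Theory.
Local Open Scope ring_scope.
Local Open Scope complex_scope.

Section Hilbert.
Variable R : realType.
Variable H : lmodType R[i].
Variable ip : H -> H -> R[i].   (* inner product, linear in the 1st argument *)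

Definition hnorm (x : H) : R := Num.sqrt (complex.Re (ip x x)).

Definition is_inner_product : Prop :=
  [/\ forall (a : R[i]) (x y z : H), ip (a *: x + y) z = a * ip x z + ip y z,
      forall x y : H, ip y x = (ip x y)^*,
      forall x : H, 0 <= ip x x
    & forall x : H, ip x x = 0 -> x = 0].

Definition is_complete : Prop :=
  forall u : nat -> H,
    (forall e : R, 0 < e -> exists N : nat, forall m n : nat,
        (N <= m)%N -> (N <= n)%N -> hnorm (u m - u n) < e) ->
    exists x : H, forall e : R, 0 < e -> exists N : nat, forall n : nat,
        (N <= n)%N -> hnorm (u n - x) < e.

Definition hilbert_space : Prop := is_inner_product /\ is_complete.

Definition bounded_op (T : H -> H) : Prop :=
  (forall (a : R[i]) (x y : H), T (a *: x + y) = a *: T x + T y) /\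
  exists M : R, forall x : H, hnorm (T x) <= M * hnorm x.

Definition opadd (S T : H -> H) : H -> H := fun x => S x + T x.
Definition opscale (a : R[i]) (T : H -> H) : H -> H := fun x => a *: T x.
Definition opopp (T : H -> H) : H -> H := fun x => - T x.
Definition opzero : H -> H := fun _ => 0.

Definition is_adjoint (T S : H -> H) : Prop :=
  forall x y : H, ip (T x) y = ip x (S y).

Definition commutant (A : (H -> H) -> Prop) : (H -> H) -> Prop :=
  fun T => bounded_op T /\ forall S, A S -> T \o S = S \o T.

Definition von_neumann_algebra (A : (H -> H) -> Prop) : Prop :=
  (forall T, A T -> bounded_op T) /\
  A id /\
  (forall S T, A S -> A T -> A (opadd S T)) /\
  (forall a T, A T -> A (opscale a T)) /\
  (forall S T, A S -> A T -> A (S \o T)) /\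
  (forall T, A T -> exists2 S, A S & is_adjoint T S) /\
  (forall T, A T <-> commutant (commutant A) T).

(* left ideal I of the operator algebra A (no closedness assumed) *)
Definition left_ideal (A I : (H -> H) -> Prop) : Prop :=
  [/\ forall T, I T -> A T,
      I opzero,
      forall S T, I S -> I T -> I (opadd S T),
      forall T, I T -> I (opopp T)
    & forall S T, A S -> I T -> I (S \o T)].

End Hilbert.

(* Main.v *)
Require Import Defs.
From HB Require Import structures.
From mathcomp Require Import all_boot all_order all_algebra.
From mathcomp Require Import complex.
From mathcomp Require Import reals boolp classical_sets.
From mathcomp Require Import ring lra.
Set Implicit Arguments. Unset Strict Implicit. Unset Printing Implicit Defensive.
Import Order.TTheory GRing.Theory Num.Theory.
Local Open Scope ring_scope.
Local Open Scope complex_scope.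



Section Gen.
Variables (R : realType) (V : lmodType R[i]) (ip : V -> V -> R[i]).
Hypothesis hip : is_inner_product ip.

Definition n2 (x : V) : R := complex.Re (ip x x).

Lemma ipDZl a x y z : ip (a *: x + y) z = a * ip x z + ip y z.
Proof. by case: hip. Qed.
Lemma ipC x y : ip y x = (ip x y)^*.
Proof. by case: hip. Qed.
Lemma ip0l z : ip 0 z = 0.
Proof.
have := ipDZl 1 0 0 z; rewrite scaler0 addr0 mul1r => h.
by apply/(addrI (ip 0 z)); rewrite addr0 -h.
Qed.
Lemma ipDl x y z : ip (x + y) z = ip x z + ip y z.
Proof. by have := ipDZl 1 x y z; rewrite scale1r mul1r. Qed.
Lemma ipZl a x z : ip (a *: x) z = a * ip x z.
Proof. by rewrite -[a *: x]addr0 ipDZl ip0l addr0. Qed.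
Lemma ipNl x z : ip (- x) z = - ip x z.
Proof. by rewrite -scaleN1r ipZl mulN1r. Qed.
Lemma ipBl x y z : ip (x - y) z = ip x z - ip y z.
Proof. by rewrite ipDl ipNl. Qed.
Lemma ipDr x y z : ip z (x + y) = ip z x + ip z y.
Proof. by rewrite [LHS]ipC [ip z x]ipC [ip z y]ipC ipDl rmorphD. Qed.
Lemma ipZr a x z : ip z (a *: x) = a^* * ip z x.
Proof. by rewrite [LHS]ipC [ip z x]ipC ipZl rmorphM. Qed.
Lemma ip0r z : ip z 0 = 0.
Proof. by rewrite ipC ip0l conjc0. Qed.
Lemma ipNr x z : ip z (- x) = - ip z x.
Proof. by rewrite [LHS]ipC [ip z x]ipC ipNl rmorphN. Qed.
Lemma ipBr x y z : ip z (x - y) = ip z x - ip z y.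
Proof. by rewrite ipDr ipNr. Qed.
Lemma ip_suml n (f : 'I_n -> V) z : ip (\sum_k f k) z = \sum_k ip (f k) z.
Proof.
elim/big_rec2: _ => [|k s t _ <-]; first by rewrite ip0l.
by rewrite ipDl.
Qed.
Lemma ip_sumr n (f : 'I_n -> V) z : ip z (\sum_k f k) = \sum_k ip z (f k).
Proof.
elim/big_rec2: _ => [|k s t _ <-]; first by rewrite ip0r.
by rewrite ipDr.
Qed.

Lemma ipxx_ge0 x : 0 <= ip x x. Proof. by case: hip. Qed.
Lemma ipxx x : ip x x = (n2 x)%:C.
Proof.
have := ger0_Im (ipxx_ge0 x); rewrite /n2.
by case: (ip x x) => a b /= ->.
Qed.
Lemma n2_ge0 x : 0 <= n2 x.
Proof. by have := ipxx_ge0 x; rewrite ipxx lecR. Qed.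
Lemma n2_eq0 x : n2 x = 0 -> x = 0.
Proof. by move=> h; case: hip => _ _ _; apply; rewrite ipxx h. Qed.
Lemma ReJ (z : R[i]) : complex.Re (z^*) = complex.Re z.
Proof. by case: z. Qed.
Lemma n2D x y : n2 (x + y) = n2 x + n2 y + 2 * complex.Re (ip x y).
Proof.
rewrite /n2 ipDl !ipDr !raddfD /= [ip y x]ipC ReJ; lra.
Qed.
Lemma n2N x : n2 (- x) = n2 x.
Proof. by rewrite /n2 ipNl ipNr opprK. Qed.
Lemma n2B x y : n2 (x - y) = n2 x + n2 y - 2 * complex.Re (ip x y).
Proof. by rewrite n2D n2N ipNr raddfN /=; lra. Qed.
Lemma n2Z a x : n2 (a *: x) = (complex.Re a ^+ 2 + complex.Im a ^+ 2) * n2 x.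
Proof.
rewrite /n2 ipZl ipZr ipxx; case: a => a b /=; rewrite /n2; lra.
Qed.

Local Notation hn := (hnorm ip).

Lemma hnE x : hn x = Num.sqrt (n2 x). Proof. by []. Qed.
Lemma hn_ge0 x : 0 <= hn x. Proof. exact: sqrtr_ge0. Qed.
Lemma hn_sqr x : hn x ^+ 2 = n2 x. Proof. by rewrite sqr_sqrtr // n2_ge0. Qed.
Lemma hn_eq0 x : hn x = 0 -> x = 0.
Proof. by move=> h; apply: n2_eq0; rewrite -hn_sqr h expr0n. Qed.
Lemma hnN x : hn (- x) = hn x. Proof. by rewrite hnE n2N. Qed.
Lemma hn0 : hn 0 = 0.
Proof. by rewrite hnE /n2 ip0l /= sqrtr0. Qed.

Lemma quad_disc (p q r : R) : 0 <= p -> 0 <= q ->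
  (forall t, 0 <= p + 2 * t * r + t ^+ 2 * q) -> r ^+ 2 <= p * q.
Proof.
move=> p0 q0 h.
have [qz|qp] := eqVneq q 0.
  have [rz|rn] := eqVneq r 0; first by rewrite rz qz; nra.
  have := h (- (p + 1) / (2 * r)); rewrite qz mulr0 addr0.
  have -> : 2 * (- (p + 1) / (2 * r)) * r = - (p + 1).
    by field; rewrite ?rn //=; rewrite pnatr_eq0.
  lra.
have qpos : 0 < q by rewrite lt_def qp.
have := h (- r / q).
have -> : p + 2 * (- r / q) * r + (- r / q) ^+ 2 * q = p - r ^+ 2 / q by field.
rewrite subr_ge0 ler_pdivrMr // => H; rewrite mulrC; exact: H.
Qed.

Lemma CS x y : complex.Re (ip x y) ^+ 2 <= n2 x * n2 y.
Proof.
apply: quad_disc; rewrite ?n2_ge0 // => t.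
have := n2_ge0 (x + t%:C *: y); rewrite n2D n2Z ipZr /=.
have -> : complex.Re (t%:C^* * ip x y) = t * complex.Re (ip x y).
  by case: (ip x y) => a b /=; ring.
lra.
Qed.

Lemma Re_le x y : complex.Re (ip x y) <= hn x * hn y.
Proof.
apply: (le_trans (ler_norm _)).
rewrite -sqrtr_sqr !hnE -sqrtrM ?n2_ge0 //; apply: ler_wsqrtr; exact: CS.
Qed.

Lemma hnD x y : hn (x + y) <= hn x + hn y.
Proof.
rewrite hnE -[hn x + hn y]ger0_norm ?addr_ge0 ?hn_ge0 // -sqrtr_sqr.
apply: ler_wsqrtr; rewrite n2D sqrrD -!hn_sqr.
have := Re_le x y; lra.
Qed.
Lemma hnB x y : hn (x - y) <= hn x + hn y.
Proof. by rewrite -(hnN y) hnD. Qed.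
Lemma hnZ a x : hn (a *: x) = Num.sqrt (complex.Re a ^+ 2 + complex.Im a ^+ 2) * hn x.
Proof. by rewrite !hnE n2Z sqrtrM // addr_ge0 // sqr_ge0. Qed.
Lemma hn_lt x (e : R) : 0 < e -> (hn x < e) = (n2 x < e ^+ 2).
Proof.
move=> e0; rewrite hnE -(@ltr_sqrt _ (n2 x) (e ^+ 2)) ?exprn_gt0 // sqrtr_sqr gtr0_norm //.
Qed.
Lemma hn_le x (e : R) : 0 <= e -> (hn x <= e) = (n2 x <= e ^+ 2).
Proof.
move=> e0; rewrite hnE -(@ler_sqrt _ (n2 x) (e ^+ 2)) ?exprn_ge0 // sqrtr_sqr ger0_norm //.
Qed.

Lemma complete_n2 (hc : is_complete ip) (u : nat -> V) :
  (forall e : R, 0 < e -> exists N, forall m k, (N <= m)%N -> (N <= k)%N ->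
     n2 (u m - u k) < e) ->
  exists x, forall e : R, 0 < e -> exists N, forall m, (N <= m)%N -> n2 (u m - x) < e.
Proof.
move=> hC.
have hC' : forall e : R, 0 < e -> exists N : nat, forall m n : nat,
        (N <= m)%N -> (N <= n)%N -> hn (u m - u n) < e.
  move=> e e0; have [N hN] := hC (e ^+ 2) (exprn_gt0 2 e0).
  by exists N => m k Hm Hk; rewrite hn_lt //; exact: hN.
have [x hx] := hc u hC'.
exists x => e e0; have e0' : 0 < Num.sqrt e by rewrite sqrtr_gt0.
have [N hN] := hx (Num.sqrt e) e0'.
exists N => m Hm; have := hN m Hm.
by rewrite hn_lt ?sqrtr_gt0 // sqr_sqrtr // ltW.
Qed.
End Gen.



Section Prod.
Variables (R : realType) (V : lmodType R[i]) (ip : V -> V -> R[i]).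
Hypothesis hip : is_inner_product ip.
Variable n : nat.
Local Notation K := {ffun 'I_n -> V}.

Definition ipK (f g : K) : R[i] := \sum_k ip (f k) (g k).

Lemma ReK (f : 'I_n -> R[i]) : complex.Re (\sum_k f k) = \sum_k complex.Re (f k).
Proof. by rewrite raddf_sum. Qed.

Lemma ipK_inner : is_inner_product ipK.
Proof.
split.
- move=> a x y z; rewrite /ipK mulr_sumr -big_split /=; apply: eq_bigr => k _.
  by rewrite !ffunE ipDZl.
- move=> x y; rewrite /ipK rmorph_sum /=; apply: eq_bigr => k _; exact: ipC.
- move=> x; rewrite /ipK; apply: sumr_ge0 => k _; exact: ipxx_ge0.
- move=> x; rewrite /ipK => h; apply/ffunP => k; rewrite ffunE.
  apply: (n2_eq0 hip).
  have : \sum_k n2 ip (x k) = 0.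
    by have := congr1 (@complex.Re R) h; rewrite ReK.
  move/eqP; rewrite psumr_eq0; last by move=> j _; exact: n2_ge0.
  by move/allP/(_ k (mem_index_enum _))/eqP.
Qed.

Lemma n2K (x : K) : n2 ipK x = \sum_k n2 ip (x k).
Proof. by rewrite /n2 /ipK ReK. Qed.

Lemma n2K_le (x : K) k : n2 ip (x k) <= n2 ipK x.
Proof.
rewrite n2K (bigD1 k) //= lerDl; apply: sumr_ge0 => j _; exact: n2_ge0.
Qed.

Lemma completeK (hc : is_complete ip) (u : nat -> K) :
  (forall e : R, 0 < e -> exists N, forall m k, (N <= m)%N -> (N <= k)%N ->
     n2 ipK (u m - u k) < e) ->
  exists x, forall e : R, 0 < e -> exists N, forall m, (N <= m)%N -> n2 ipK (u m - x) < e.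
Proof.
move=> hC.
have hk : forall k : 'I_n, exists l, forall e : R, 0 < e -> exists N, forall m,
    (N <= m)%N -> n2 ip (u m k - l) < e.
  move=> k; apply: (complete_n2 hc) => e e0; have [N hN] := hC e e0.
  exists N => m j Hm Hj; apply: le_lt_trans (hN m j Hm Hj).
  by have := n2K_le (u m - u j) k; rewrite !ffunE.
have [l hl] := choice hk.
exists [ffun k => l k] => e e0.
have en : 0 < e / (n%:R + 1) by rewrite divr_gt0 // ltr_wpDl.
have hN : forall k, exists N, forall m, (N <= m)%N -> n2 ip (u m k - l k) < e / (n%:R + 1).
  by move=> k; apply: hl.
have [N hN'] := choice hN.
exists (\max_k N k)%N => m Hm.
rewrite n2K.
apply: (@le_lt_trans _ _ (\sum_(k < n) e / (n%:R + 1))).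
  apply: ler_sum => k _; rewrite !ffunE; apply/ltW/hN'.
  by apply: leq_trans Hm; exact: leq_bigmax.
rewrite sumr_const card_ord -(mulr_natr (e / (n%:R + 1)) n).
have n0 : (0 : R) <= n%:R by [].
rewrite mulrAC ltr_pdivrMr ?ltr_wpDl //.
by rewrite mulrDr mulr1 ltrDl.
Qed.
End Prod.



Section Lin.
Variables (R : realType) (U1 U2 : lmodType R[i]).
Definition lin (f : U1 -> U2) := forall a x y, f (a *: x + y) = a *: f x + f y.
Variables (f : U1 -> U2) (hf : lin f).
Lemma lin0 : f 0 = 0.
Proof.
have := hf 1 0 0; rewrite scaler0 addr0 scale1r => h.
by apply/(addrI (f 0)); rewrite addr0 -h.
Qed.
Lemma linD x y : f (x + y) = f x + f y.
Proof. by have := hf 1 x y; rewrite !scale1r. Qed.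
Lemma linZ a x : f (a *: x) = a *: f x.
Proof. by have := hf a x 0; rewrite !addr0 lin0 addr0. Qed.
Lemma linN x : f (- x) = - f x.
Proof. by rewrite -scaleN1r linZ scaleN1r. Qed.
Lemma linB x y : f (x - y) = f x - f y.
Proof. by rewrite linD linN. Qed.
Lemma lin_sum n (g : 'I_n -> U1) : f (\sum_k g k) = \sum_k f (g k).
Proof.
elim/big_rec2: _ => [|k s t _ <-]; first exact: lin0.
by rewrite linD.
Qed.
End Lin.

Lemma lin_comp (R : realType) (U1 U2 U3 : lmodType R[i]) (f : U2 -> U3) (g : U1 -> U2) :
  lin f -> lin g -> lin (f \o g).
Proof. by move=> hf hg a x y /=; rewrite hg hf. Qed.

Section RealMisc.
Variable R : realType.
Lemma small_le0 (r h : R) : 0 <= h -> (forall e, 0 < e -> r <= e * h) -> r <= 0.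
Proof.
move=> h0 H; apply/ler_addgt0Pr => e e0; rewrite add0r.
have h1 : 0 < h + 1 by lra.
apply: (le_trans (H (e / (h + 1)) (divr_gt0 e0 h1))).
rewrite mulrAC ler_pdivrMr // ler_pM2l //; lra.
Qed.
Lemma quad0 (q r : R) : 0 <= q -> (forall t, 0 <= t ^+ 2 * q - 2 * t * r) -> r = 0.
Proof.
move=> q0 H.
have : (- r) ^+ 2 <= 0 * q.
  by apply: quad_disc => // t; have := H t; lra.
rewrite mul0r => hr.
have : (- r) ^+ 2 == 0 by rewrite eq_le hr sqr_ge0.
by rewrite sqrf_eq0 oppr_eq0 => /eqP.
Qed.
Lemma invS_le (N j : nat) : (N <= j)%N -> (j.+1%:R)^-1 <= (N.+1%:R)^-1 :> R.
Proof.
move=> hj; rewrite lef_pV2 ?posrE ?ltr0Sn // ler_nat; exact: hj.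
Qed.
Lemma invS_small (e : R) : 0 < e -> exists N : nat, forall j, (N <= j)%N -> (j.+1%:R)^-1 < e.
Proof.
move=> e0; have [k hk] := ltr_add_invr e0; exists k => j hj.
rewrite add0r in hk; move: hk; apply: le_lt_trans; exact: invS_le.
Qed.
Lemma Cz0 (z : R[i]) : complex.Re z = 0 -> complex.Im z = 0 -> z = 0.
Proof. by case: z => a b /= -> ->. Qed.
End RealMisc.



Section Main.
Variables (R : realType) (H : lmodType R[i]) (ip : H -> H -> R[i]).
Hypotheses (hip : is_inner_product ip) (hc : is_complete ip).
Variable vNA : (H -> H) -> Prop.
Variable n : nat.
Variables (S Tk A : 'I_n -> H -> H).
Hypotheses (hS : forall k, bounded_op ip (S k)) (hTk : forall k, bounded_op ip (Tk k))
  (hA : forall k, bounded_op ip (A k)) (hadj : forall k, is_adjoint ip (Tk k) (A k)).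
Local Notation K := {ffun 'I_n -> H}.
Local Notation ipn := (@ipK R H ip n).
Local Notation hn := (hnorm ip).
Local Notation hnK := (hnorm ipn).
Let hipK : is_inner_product ipn := ipK_inner hip n.

Lemma bnd_M (T : H -> H) : bounded_op ip T ->
  exists M : R, 0 <= M /\ forall x, hn (T x) <= M * hn x.
Proof.
case=> _ [M hM]; exists (Num.max M 0); split; first by rewrite le_max lexx orbT.
move=> x; apply: (le_trans (hM x)); apply: ler_wpM2r; first exact: hn_ge0.
by rewrite le_max lexx.
Qed.

Definition Phi x : K := [ffun k => Tk k x].
Definition Psi (w : K) : H := \sum_k A k (w k).
Definition St (w : K) : H := \sum_k S k (w k).
Definition Ut (U : H -> H) (w : K) : K := [ffun k => U (w k)].
Definition iota k (h : H) : K := [ffun j => if j == k then h else 0].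
Definition Cl (w : K) := forall e : R, 0 < e -> exists x, hnK (w - Phi x) < e.

Lemma lin_Phi : lin Phi.
Proof. by move=> a x y; apply/ffunP => k; rewrite !ffunE (hTk k).1. Qed.
Lemma lin_sumop (F : 'I_n -> H -> H) : (forall k, lin (F k)) ->
  lin (fun w : K => \sum_k F k (w k)).
Proof.
move=> hF a x y; rewrite scaler_sumr -big_split /=; apply: eq_bigr => k _.
by rewrite !ffunE hF.
Qed.
Lemma lin_Psi : lin Psi.
Proof. by apply: lin_sumop => k; exact: (hA k).1. Qed.
Lemma lin_St : lin St.
Proof. by apply: lin_sumop => k; exact: (hS k).1. Qed.
Lemma lin_Ut U : lin U -> lin (Ut U).
Proof. by move=> hU a x y; apply/ffunP => k; rewrite !ffunE hU. Qed.
Lemma lin_iota k : lin (iota k).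
Proof.
move=> a x y; apply/ffunP => j; rewrite !ffunE.
by case: (j == k); rewrite ?scaler0 ?addr0.
Qed.

Lemma ipK_Phi x w : ipn (Phi x) w = ip x (Psi w).
Proof.
rewrite /ipK /Psi ip_sumr //; apply: eq_bigr => k _; rewrite ffunE; exact: hadj.
Qed.

Lemma Cl_Phi x : Cl (Phi x).
Proof. by move=> e e0; exists x; rewrite subrr hn0. Qed.

Lemma Cl_lin a c1 c2 : Cl c1 -> Cl c2 -> Cl (a *: c1 + c2).
Proof.
move=> h1 h2 e e0.
set s := Num.sqrt (complex.Re a ^+ 2 + complex.Im a ^+ 2).
have s0 : 0 <= s := sqrtr_ge0 _.
have e1 : 0 < e / (2 * (s + 1)) by rewrite divr_gt0 // mulr_gt0 //; lra.
have e2 : 0 < e / 2 by rewrite divr_gt0.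
have [x1 hx1] := h1 _ e1; have [x2 hx2] := h2 _ e2.
exists (a *: x1 + x2).
have -> : a *: c1 + c2 - Phi (a *: x1 + x2) = a *: (c1 - Phi x1) + (c2 - Phi x2).
  by rewrite lin_Phi scalerBr opprD addrACA.
apply: (le_lt_trans (hnD hipK _ _)); rewrite hnZ //.
have : s * hnK (c1 - Phi x1) <= s * (e / (2 * (s + 1))).
  by apply: ler_wpM2l => //; exact: ltW.
have : s * (e / (2 * (s + 1))) <= e / 2.
  rewrite mulrCA ler_pM2l // ler_pdivrMr ?mulr_gt0 //; try lra.
rewrite -/s; lra.
Qed.

Lemma Cl_B c1 c2 : Cl c1 -> Cl c2 -> Cl (c1 - c2).
Proof. by move=> h1 h2; rewrite addrC -scaleN1r; apply: Cl_lin. Qed.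

Lemma orth c w : Cl c -> Psi w = 0 -> complex.Re (ipn c w) = 0.
Proof.
move=> hcl hw.
have E : forall x, ipn c w = ipn (c - Phi x) w.
  by move=> x; rewrite (ipBl hipK) ipK_Phi hw (ip0r hip) subr0.
have h1 : complex.Re (ipn c w) <= 0.
  apply: (small_le0 (hn_ge0 ipn w)) => e e0; have [x hx] := hcl e e0.
  rewrite (E x); apply: le_trans (Re_le hipK _ _) _.
  by apply: ler_wpM2r; [exact: hn_ge0 | exact: ltW].
have h2 : - complex.Re (ipn c w) <= 0.
  apply: (small_le0 (hn_ge0 ipn w)) => e e0; have [x hx] := hcl e e0.
  rewrite (E x) -raddfN /= -(ipNl hipK); apply: le_trans (Re_le hipK _ _) _.
  rewrite hnN; [by apply: ler_wpM2r; [exact: hn_ge0 | exact: ltW] | exact: hipK].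
lra.
Qed.

Lemma uniq0 v : Cl v -> Psi v = 0 -> v = 0.
Proof.
move=> hv hp; apply: (n2_eq0 hipK); exact: orth.
Qed.

Lemma n2_dbl (V : lmodType R[i]) (ipV : V -> V -> R[i]) :
  is_inner_product ipV -> forall v, n2 ipV (v + v) = 4 * n2 ipV v.
Proof. by move=> hV v; rewrite (n2D hV) -/(n2 ipV v); lra. Qed.

Lemma hn_le_n2 (V : lmodType R[i]) (ipV : V -> V -> R[i]) :
  is_inner_product ipV -> forall a b, hnorm ipV a <= hnorm ipV b -> n2 ipV a <= n2 ipV b.
Proof.
move=> hV a b h; rewrite -(hn_sqr hV a) -(hn_sqr hV b) !expr2.
by apply: ler_pM => //; exact: hn_ge0.
Qed.

Lemma proj y : exists m, Cl m /\ Psi (y - m) = 0.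
Proof.
pose D := [set r : R | exists x, r = n2 ipn (y - Phi x)]%classic.
have D0 : D (n2 ipn (y - Phi 0)) by exists 0.
have lbD : lbound D 0 by move=> r [x ->]; exact: n2_ge0.
have hlb : has_lbound D by exists 0.
have hinf : has_inf D by split => //; exists (n2 ipn (y - Phi 0)).
set d := inf D.
have hd : forall x, d <= n2 ipn (y - Phi x).
  by move=> x; apply: (ge_inf hlb); exists x.
have d0 : 0 <= d by apply: lb_le_inf => //; exists (n2 ipn (y - Phi 0)).
have hseq : forall j : nat, exists x, n2 ipn (y - Phi x) < d + (j.+1%:R)^-1.
  move=> j; have ej : 0 < (j.+1%:R)^-1 :> R by rewrite invr_gt0.
  have [r [x ->] hr] := @inf_adherent R D (j.+1%:R)^-1 ej hinf.
  by exists x.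
have [xs hxs] := choice hseq.
pose ms j := Phi (xs j).
have hh : (2^-1 : R[i]) + 2^-1 = 1.
  by field.
have cauchy : forall j k, n2 ipn (ms k - ms j) <= 2 * (j.+1%:R)^-1 + 2 * (k.+1%:R)^-1.
  move=> j k.
  pose u := y - Phi (2^-1 *: (xs j + xs k)).
  have E : (y - ms j) - (y - ms k) = ms k - ms j.
    by rewrite opprB addrC addrA subrK.
  have F1 : u + u = (y + y) - (ms j + ms k).
    by rewrite /u addrACA -opprD -(linD lin_Phi) -scalerDl hh scale1r (linD lin_Phi).
  have F : (y - ms j) + (y - ms k) = u + u by rewrite F1 addrACA opprD.
  have := n2D hipK (y - ms j) (y - ms k).
  have := n2B hipK (y - ms j) (y - ms k).
  rewrite E F n2_dbl //.
  have := hd (2^-1 *: (xs j + xs k)); rewrite -/u.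
  have := hxs j; have := hxs k; rewrite -/(ms j) -/(ms k).
  move: (j.+1%:R^-1) (k.+1%:R^-1) => a b; lra.
have hC : forall e : R, 0 < e -> exists N, forall j k, (N <= j)%N -> (N <= k)%N ->
    n2 ipn (ms j - ms k) < e.
  move=> e e0; have [N hN] := invS_small (divr_gt0 e0 (ltr0Sn R 3)).
  exists N => j k hj hk; apply: (le_lt_trans (cauchy k j)).
  have := hN j hj; have := hN k hk; move: (j.+1%:R^-1) (k.+1%:R^-1) => a b; lra.
have [m hm] := completeK hip hc hC.
have hCm : Cl m.
  move=> e e0; have [N hN] := hm (e ^+ 2) (exprn_gt0 2 e0).
  exists (xs N); rewrite -opprB (hnN hipK) (hn_lt _ _ e0); exact: hN.
have low : forall c, Cl c -> Num.sqrt d <= hnK (y - c).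
  move=> c hcl; apply/ler_addgt0Pr => e e0; have [x hx] := hcl e e0.
  have h1 : Num.sqrt d <= hnK (y - Phi x) by rewrite hnE; apply: ler_wsqrtr; exact: hd.
  have h2 : hnK (y - Phi x) <= hnK (y - c) + hnK (c - Phi x).
    by have := hnD hipK (y - c) (c - Phi x); rewrite addrA subrK.
  lra.
have up : hnK (y - m) <= Num.sqrt d.
  apply/ler_addgt0Pr => e e0.
  have e2 : 0 < e / 2 by rewrite divr_gt0.
  have e22 : 0 < (e / 2) ^+ 2 by rewrite exprn_gt0.
  have [N1 hN1] := invS_small e22.
  have [N2 hN2] := hm _ e22.
  set j := maxn N1 N2.
  have h1 : hnK (y - m) <= hnK (y - ms j) + hnK (ms j - m).
    by have := hnD hipK (y - ms j) (ms j - m); rewrite addrA subrK.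
  have h2 : hnK (ms j - m) < e / 2.
    by rewrite hn_lt //; apply: hN2; rewrite leq_maxr.
  have sd0 := sqrtr_ge0 d.
  have h3 : hnK (y - ms j) < Num.sqrt d + e / 2.
    rewrite hn_lt; last lra.
    have := hxs j; have := hN1 j (leq_maxl _ _).
    rewrite sqrrD sqr_sqrtr //.
    have : 0 <= Num.sqrt d * (e / 2) by rewrite mulr_ge0 // ltW.
    rewrite -/(ms j) mulr2n; move: (j.+1%:R^-1) => a; lra.
  lra.
have var : forall x', complex.Re (ipn (y - m) (Phi x')) = 0.
  move=> x'; set w := y - m; set z := Phi x'.
  apply: (quad0 (n2_ge0 hipK z)) => t.
  have hle : hnK w <= hnK (w - t%:C *: z).
    apply: le_trans up _.
    have -> : w - t%:C *: z = y - (t%:C *: z + m)%R.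
      by rewrite /w opprD addrA addrAC.
    apply: low; apply: Cl_lin => //; exact: Cl_Phi.
  have := hn_le_n2 hipK hle.
  rewrite (n2B hipK w) (n2Z hipK) (ipZr hipK) /=.
  have -> : complex.Re (t%:C^* * ipn w z) = t * complex.Re (ipn w z).
    by case: (ipn w z) => a b /=; ring.
  lra.
have var2 : forall x', ipn (y - m) (Phi x') = 0.
  move=> x'; apply: Cz0; first exact: var.
  have := var ('i *: x'); rewrite (linZ lin_Phi) (ipZr hipK).
  by case: (ipn (y - m) (Phi x')) => a b /=; lra.
exists m; split => //.
have h0 := var2 (Psi (y - m)).
rewrite (ipC hipK) ipK_Phi in h0.
have h1 : ip (Psi (y - m)) (Psi (y - m)) = 0.
  by apply/eqP; rewrite -conjc_eq0; apply/eqP.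
by case: hip => _ _ _; apply.
Qed.

Lemma hn_sum (V : lmodType R[i]) (ipV : V -> V -> R[i]) :
  is_inner_product ipV -> forall (f : 'I_n -> V),
  hnorm ipV (\sum_k f k) <= \sum_k hnorm ipV (f k).
Proof.
move=> hV f; elim/big_ind2: _ => [|a b c d' h1 h2|k _].
- by rewrite hn0.
- by apply: le_trans (hnD hV _ _) _; exact: lerD.
- by [].
Qed.

Lemma hn_comp (w : K) k : hn (w k) <= hnK w.
Proof. by rewrite !hnE; apply: ler_wsqrtr; exact: n2K_le. Qed.

Variable T : H -> H.
Hypothesis hT : forall x, T x = St (Phi x).

Definition comm (U : H -> H) := [/\ bounded_op ip U, (forall k, U \o Tk k = Tk k \o U),
  (forall k, U \o A k = A k \o U) & U \o T = T \o U].

Lemma main_W : exists W : 'I_n -> H -> H,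
  (forall k, bounded_op ip (W k) /\ forall U, comm U -> W k \o U = U \o W k) /\
  forall x, T x = \sum_k W k (Tk k x).
Proof.
have [P hP] := choice proj.
have uniqP : forall y m, Cl m -> Psi (y - m) = 0 -> P y = m.
  move=> y m hm hpm; apply/eqP; rewrite -subr_eq0; apply/eqP; apply: uniq0.
    by apply: Cl_B => //; case: (hP y).
  have -> : P y - m = (y - m) - (y - P y) by rewrite opprB [RHS]addrC addrA subrK.
  by rewrite (linB lin_Psi) hpm (hP y).2 subrr.
have linP : lin P.
  move=> a y y'; apply: uniqP.
    by apply: Cl_lin; [case: (hP y) | case: (hP y')].
  have -> : a *: y + y' - (a *: P y + P y') = a *: (y - P y) + (y' - P y').
    by rewrite scalerBr opprD addrACA.
  by rewrite lin_Psi (hP y).2 (hP y').2 scaler0 addr0.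
have Pbnd : forall y, hnK (P y) <= hnK y.
  move=> y; rewrite !hnE; apply: ler_wsqrtr.
  have -> : n2 ipn y = n2 ipn (P y + (y - P y)) by rewrite addrC subrK.
  rewrite (n2D hipK) (orth (hP y).1 (hP y).2).
  have := n2_ge0 hipK (y - P y); lra.
have PPhi : forall x, P (Phi x) = Phi x.
  by move=> x; apply: uniqP; [exact: Cl_Phi | rewrite subrr (lin0 lin_Psi)].
have [Ms hMs] := choice (fun k => bnd_M (hS k)).
pose MS := \sum_k Ms k.
have MS0 : 0 <= MS by apply: sumr_ge0 => k _; exact: (hMs k).1.
have Stbnd : forall w, hn (St w) <= MS * hnK w.
  move=> w; apply: le_trans (hn_sum hip _) _.
  rewrite /MS mulr_suml; apply: ler_sum => k _.
  apply: le_trans ((hMs k).2 _) _; apply: ler_wpM2l; first exact: (hMs k).1.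
  exact: hn_comp.
have Ucl : forall U, comm U -> forall c,
    P (Ut U c) = Ut U (P c) /\ St (Ut U (P c)) = U (St (P c)).
  move=> U [hU hUT hUA hUTT] c.
  have [MU [MU0 hMU]] := bnd_M hU.
  have Utbnd : forall w, hnK (Ut U w) <= MU * hnK w.
    move=> w; rewrite !hnE -(ger0_norm MU0) -sqrtr_sqr -sqrtrM ?sqr_ge0 //.
    apply: ler_wsqrtr; rewrite !n2K mulr_sumr; apply: ler_sum => k _.
    rewrite ffunE -!(hn_sqr hip) -exprMn; apply: lerXn2r; rewrite ?nnegrE ?mulr_ge0 ?hn_ge0 //.
  have UPhi : forall x, Ut U (Phi x) = Phi (U x).
    move=> x; apply/ffunP => k; rewrite !ffunE.
    by have := congr1 (fun f => f x) (hUT k).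
  have ClU : forall c, Cl c -> Cl (Ut U c).
    move=> c' hc' e e0.
    have e1 : 0 < e / (MU + 1) by rewrite divr_gt0 //; lra.
    have [x hx] := hc' _ e1; exists (U x).
    rewrite -UPhi -(linB (lin_Ut hU.1)).
    apply: le_lt_trans (Utbnd _) _.
    apply: (@le_lt_trans _ _ (MU * (e / (MU + 1)))).
      by apply: ler_wpM2l => //; exact: ltW.
    rewrite mulrCA gtr_pMr // ltr_pdivrMr; lra.
  have PsiU : forall w, Psi (Ut U w) = U (Psi w).
    move=> w; rewrite /Psi (lin_sum hU.1); apply: eq_bigr => k _.
    by rewrite ffunE; have := congr1 (fun f => f (w k)) (hUA k).
  have PU : forall y, P (Ut U y) = Ut U (P y).
    move=> y; apply: uniqP; first by apply: ClU; case: (hP y).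
    by rewrite -(linB (lin_Ut hU.1)) PsiU (hP y).2 (lin0 hU.1).
  have StU : forall c, Cl c -> St (Ut U c) = U (St c).
    move=> c' hc'; apply/eqP; rewrite -subr_eq0; apply/eqP; apply: (hn_eq0 hip).
    apply/eqP; rewrite eq_le hn_ge0 andbT.
    apply: (small_le0 (h := MS * MU + MU * MS)); first by rewrite addr_ge0 // mulr_ge0.
    move=> e e0; have [x hx] := hc' e e0.
    have -> : St (Ut U c') - U (St c') =
        St (Ut U (c' - Phi x)) - U (St (c' - Phi x)).
      rewrite (linB (lin_Ut hU.1)) UPhi !(linB lin_St) (linB hU.1) -!hT.
      have -> : T (U x) = U (T x) by have := congr1 (fun f => f x) hUTT.
      by rewrite opprB addrA subrK.
    apply: le_trans (hnB hip _ _) _.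
    have h1 : hn (St (Ut U (c' - Phi x))) <= MS * (MU * e).
      apply: le_trans (Stbnd _) _; apply: ler_wpM2l => //.
      apply: le_trans (Utbnd _) _; apply: ler_wpM2l => //; exact: ltW.
    have h2 : hn (U (St (c' - Phi x))) <= MU * (MS * e).
      apply: le_trans (hMU _) _; apply: ler_wpM2l => //.
      apply: le_trans (Stbnd _) _; apply: ler_wpM2l => //; exact: ltW.
    have -> : e * (MS * MU + MU * MS) = MS * (MU * e) + MU * (MS * e) by ring.
    exact: lerD.
  split; first exact: PU.
  by apply: StU; case: (hP c).
pose W k h := St (P (iota k h)).
exists W; split.
  move=> k; split.
    split; first by move=> a x y; rewrite /W (lin_iota k) linP lin_St.
    exists MS => h; apply: le_trans (Stbnd _) _; apply: ler_wpM2l => //.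
    apply: le_trans (Pbnd _) _.
    rewrite le_eqVlt; apply/orP; left; apply/eqP.
    rewrite !hnE n2K (bigD1 k) //= big1 ?addr0; first by rewrite ffunE eqxx.
    move=> j /negbTE hj; rewrite ffunE hj /n2 (ip0l hip); done.
  move=> U hU; apply: funext => h /=; rewrite /W.
  have [hUb _ _ _] := hU.
  have -> : iota k (U h) = Ut U (iota k h).
    apply/ffunP => j; rewrite !ffunE; case: (j == k) => //.
    by rewrite (lin0 hUb.1).
  by have [-> ->] := Ucl U hU (iota k h).
move=> x; rewrite hT -PPhi.
have -> : Phi x = \sum_k iota k (Tk k x).
  apply/ffunP => j; rewrite sum_ffunE ffunE (bigD1 j) //= big1 ?addr0.
    by rewrite ffunE eqxx.
  by move=> k hk; rewrite ffunE eq_sym (negbTE hk).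
by rewrite (lin_sum linP) (lin_sum lin_St).
Qed.
End Main.



Section Bnd.
Variables (R : realType) (H : lmodType R[i]) (ip : H -> H -> R[i]).
Hypothesis hip : is_inner_product ip.
Local Notation hn := (hnorm ip).

Lemma bnd_zero : bounded_op ip (@opzero R H).
Proof.
split; first by move=> a x y; rewrite /opzero scaler0 addr0.
by exists 0 => x; rewrite /opzero (hn0 hip) mul0r.
Qed.
Lemma bnd_add S T : bounded_op ip S -> bounded_op ip T -> bounded_op ip (opadd S T).
Proof.
move=> hS hT; split.
  by move=> a x y; rewrite /opadd hS.1 hT.1 scalerDr addrACA.
have [M1 [M10 h1]] := bnd_M hS; have [M2 [M20 h2]] := bnd_M hT.
exists (M1 + M2) => x; rewrite /opadd mulrDl.
by apply: le_trans (hnD hip _ _) _; apply: lerD.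
Qed.
Lemma bnd_opp T : bounded_op ip T -> bounded_op ip (opopp T).
Proof.
move=> hT; split.
  by move=> a x y; rewrite /opopp hT.1 opprD scalerN.
have [M [M0 h]] := bnd_M hT; exists M => x; rewrite /opopp hnN //.
Qed.
Lemma bnd_comp S T : bounded_op ip S -> bounded_op ip T -> bounded_op ip (S \o T).
Proof.
move=> hS hT; split.
  by move=> a x y /=; rewrite hT.1 hS.1.
have [M1 [M10 h1]] := bnd_M hS; have [M2 [M20 h2]] := bnd_M hT.
exists (M1 * M2) => x /=; apply: le_trans (h1 _) _; rewrite -mulrA.
by apply: ler_wpM2l.
Qed.
Lemma bnd_id : bounded_op ip id.
Proof. by split => //; exists 1 => x; rewrite mul1r. Qed.
End Bnd.

Section Final.
Variables (R : realType) (H : lmodType R[i]) (ip : H -> H -> R[i]).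
Variable (A I : (H -> H) -> Prop).
Hypothesis hI : left_ideal A I.

Lemma I_sum n (F : 'I_n -> H -> H) : (forall k, I (F k)) -> I (fun x => \sum_k F k x).
Proof.
case: hI => _ h0 hadd _ _.
elim: n F => [|n IH] F hF.
  have -> : (fun x => \sum_(k < 0) F k x) = @opzero R H by apply: funext => x; rewrite big_ord0.
  exact: h0.
have -> : (fun x => \sum_(k < n.+1) F k x) =
    opadd (fun x => \sum_(k < n) F (widen_ord (leqnSn n) k) x) (F ord_max).
  by apply: funext => x; rewrite /opadd big_ord_recr.
by apply: hadd; [apply: IH | ].
Qed.
End Final.

Definition Jset (R : realType) (H : lmodType R[i]) (ip : H -> H -> R[i])
  (I : (H -> H) -> Prop) (T : H -> H) : Prop :=
  bounded_op ip T /\ exists n (S Tk : 'I_n -> H -> H),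
    [/\ forall k, bounded_op ip (S k), forall k, I (Tk k) &
        forall x, T x = \sum_k S k (Tk k x)].

Theorem corollary3p11 (R : realType) (H : lmodType R[i]) (ip : H -> H -> R[i])
  (hH : hilbert_space ip)
  (vNA : (H -> H) -> Prop) (hvNA : von_neumann_algebra ip vNA)
  (I : (H -> H) -> Prop) (hI : left_ideal vNA I) :
  exists J : (H -> H) -> Prop,
    left_ideal (bounded_op ip) J /\
    (forall T : H -> H, I T <-> (J T /\ vNA T)).
Proof.
case: hH => hip hc.
case: hvNA => hb [hid [hadd [hsc [hmul [hadjA hcc]]]]].
have hI' := hI; case: hI' => hIsub hI0 hIadd hIopp hImul.
exists (Jset ip I); split.
  split.
  - by move=> T [].
  - split; first exact: bnd_zero.
    exists 0%N, (fun _ => id), (fun _ => @opzero R H); split.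
    + by move=> k; exact: bnd_id.
    + by move=> k; exact: hI0.
    + by move=> x; rewrite big_ord0.
  - move=> S T [bS [n1 [S1 [T1 [hS1 hT1 eS]]]]] [bT [n2 [S2 [T2 [hS2 hT2 eT]]]]].
    split; first exact: bnd_add.
    exists (n1 + n2)%N.
    exists (fun i => match split i with inl a => S1 a | inr b => S2 b end).
    exists (fun i => match split i with inl a => T1 a | inr b => T2 b end).
    split.
    + by move=> i; case: (split i).
    + by move=> i; case: (split i).
    + move=> x; rewrite big_split_ord /= /opadd eS eT.
      congr (_ + _); apply: eq_bigr => i _.
        by have := unsplitK (inl i : 'I_n1 + 'I_n2) => /= ->.
      by have := unsplitK (inr i : 'I_n1 + 'I_n2) => /= ->.
  - move=> T [bT [n [S [Tk [hS hTk eT]]]]].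
    split; first exact: bnd_opp.
    exists n, (fun k => opopp (S k)), Tk; split => //.
      by move=> k; apply: bnd_opp.
    by move=> x; rewrite /opopp eT -sumrN.
  - move=> S' T bS' [bT [n [S [Tk [hS hTk eT]]]]].
    split; first exact: bnd_comp.
    exists n, (fun k => S' \o S k), Tk; split => //.
      by move=> k; apply: bnd_comp.
    by move=> x /=; rewrite eT (lin_sum bS'.1).
move=> T; split.
  move=> IT; split; last exact: hIsub.
  split; first exact/hb/hIsub.
  exists 1%N, (fun _ => id), (fun _ => T); split => //.
  - by move=> k; exact: bnd_id.
  - by move=> x; rewrite big_ord1.
case=> [[bT [n [S [Tk [hS hTk eT]]]]] vT].
have hadjk : forall k, exists A, vNA A /\ is_adjoint ip (Tk k) A.
  by move=> k; have [A hA hadj] := hadjA _ (hIsub _ (hTk k)); exists A.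
have [A hA] := choice hadjk.
have hT' : forall x, T x = St S (Phi Tk x).
  by move=> x; rewrite eT /St; apply: eq_bigr => k _; rewrite ffunE.
have [W [hW eW]] := main_W hip hc hS (fun k => hb _ (hIsub _ (hTk k)))
  (fun k => hb _ (hA k).1) (fun k => (hA k).2) hT'.
have vW : forall k, vNA (W k).
  move=> k; apply/hcc; split; first exact: (hW k).1.
  move=> U [bU hU]; apply: (hW k).2; split => //.
  - by move=> j; apply: hU; exact: hIsub.
  - by move=> j; apply: hU; exact: (hA j).1.
  - exact: hU.
have -> : T = (fun x => \sum_k (W k \o Tk k) x) by apply: funext => x; rewrite eW.
apply: (I_sum hI) => k; exact: hImul (vW k) (hTk k).
Qed.
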